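(* Let $G$ be a graph whose twin graph $G^*$ is isomorphic to a triangle with one pendant edge attached (so $G^*$ has two vertices of degree 2, one of degree 3 and one leaf), where one of the degree-2 vertices is of type (N), the other degree-2 vertex is of type (1K), the leaf is of type (1N), and moreover, if the degree-2 vertex of type (1K) is of type (K), then neither the leaf nor the degree-3 vertex is of type (N). Then $D(G)\neq n(G)-2$.
   Context: All graphs are finite and simple; $n(G)=|V(G)|$; $N_G(u)$ is the neighborhood of $u$. A distinguishing coloring of a graph $G$ is a (not necessarily proper) vertex coloring such that the only automorphism of $G$ mapping every vertex to a vertex of the same color is the identity; the distinguishing number $D(G)$ is the minimum number of colors in a distinguishing coloring of $G$. Two distinct vertices $u,v$ are twins if $N_G(u)\setminus\{v\}=N_G(v)\setminus\{u\}$. The relation $u\equiv v$ iff $u=v$ or $u,v$ are twins is an equivalence relation; the class of $v$ is denoted $v^*$. The twin graph $G^*$ has the equivalence classes as vertices, distinct classes $u^*,v^*$ being adjacent iff $uv\in E(G)$. Each class induces a complete or an edgeless graph. A class $v^*$ is of type (1) if $|v^*|=1$, of type (K) if $|v^*|\ge 2$ and it induces a complete graph, and of type (N) if $|v^*|\ge2$ and it induces an edgeless graph; type (1K) means type (1) or (K), type (1N) means (1) or (N), and type (KN) means (K) or (N). *)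

(* Defs.v *)
From mathcomp Require Import all_boot all_fingroup.
Set Implicit Arguments. Unset Strict Implicit. Unset Printing Implicit Defensive.

(* A simple graph on a finite vertex type T is given by a relation e : rel T,
   assumed symmetric and irreflexive (hypotheses in the theorem). *)
Section Graphs.
Variables (T : finType) (e : rel T).

Definition nbhd (u : T) : {set T} := [set w | e u w].

Definition is_autb (s : {perm T}) : bool :=
  [forall x, forall y, e (s x) (s y) == e x y].

Definition dist_colb (k : nat) (c : {ffun T -> 'I_k}) : bool :=
  [forall s : {perm T}, (is_autb s && [forall x, c (s x) == c x]) ==> (s == 1%g)].

Definition has_dist_col (k : nat) : bool :=
  [exists c : {ffun T -> 'I_k}, dist_colb c].

Lemma has_dist_col_card : has_dist_col #|T|.
Proof.
apply/existsP; exists [ffun x => enum_rank x].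
apply/forallP => s; apply/implyP => /andP [_ /forallP Hc].
apply/eqP/permP => x; rewrite perm1.
by move: (Hc x); rewrite !ffunE => /eqP /enum_rank_inj.
Qed.

Lemma has_dist_col_ex : exists k, has_dist_col k.
Proof. by exists #|T|; exact: has_dist_col_card. Qed.

Definition dist_number : nat := ex_minn has_dist_col_ex.

Definition twins (u v : T) : bool :=
  (u != v) && (nbhd u :\ v == nbhd v :\ u).

Definition twin_class (v : T) : {set T} := [set u | (u == v) || twins u v].

Definition twin_classes : {set {set T}} := [set twin_class v | v : T].

Definition class_adj (A B : {set T}) : bool :=
  (A != B) && [exists u in A, exists v in B, e u v].

Definition type1 (A : {set T}) : bool := #|A| == 1.
Definition typeK (A : {set T}) : bool :=
  (2 <= #|A|) && [forall u in A, forall v in A, (u != v) ==> e u v].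
Definition typeN (A : {set T}) : bool :=
  (2 <= #|A|) && [forall u in A, forall v in A, ~~ e u v].

End Graphs.

(* Main.v *)
Require Import Defs.
From mathcomp Require Import all_boot all_fingroup.
From mathcomp Require Import zify.
Set Implicit Arguments. Unset Strict Implicit. Unset Printing Implicit Defensive.

Definition twb (T : finType) (e : rel T) (u v : T) : bool :=
  [forall z, (z != u) ==> (z != v) ==> (e u z == e v z)].

Lemma twins_twb (T : finType) (e : rel T) (irr : irreflexive e) u v :
  twins e u v = (u != v) && twb e u v.
Proof.
rewrite /twins; congr (_ && _); apply/eqP/forallP.
- move=> /setP H z; apply/implyP => zu; apply/implyP => zv.
  by have := H z; rewrite /nbhd !inE zu zv /= => ->.
- move=> H; apply/setP => z; rewrite /nbhd !inE.
  have [->|zv] := eqVneq z v; first by rewrite irr andbF.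
  have [->|zu] := eqVneq z u; first by rewrite irr andbF.
  by have := H z; rewrite zu zv /= => /eqP ->.
Qed.

Lemma twb_refl (T : finType) (e : rel T) u : twb e u u.
Proof. by apply/forallP => z; apply/implyP => _; apply/implyP => _. Qed.

Lemma twb_sym (T : finType) (e : rel T) u v : twb e u v -> twb e v u.
Proof.
move=> /forallP H; apply/forallP => z; apply/implyP => zv; apply/implyP => zu.
by have := H z; rewrite zu zv /= eq_sym.
Qed.

Lemma twb_trans (T : finType) (e : rel T) (sym : symmetric e) u v w :
  twb e u v -> twb e v w -> twb e u w.
Proof.
move=> /forallP H1 /forallP H2; apply/forallP => z; apply/implyP => zu.
apply/implyP => zw.
have [uw|uw] := eqVneq u w; first by rewrite uw.
have [zv|zv] := eqVneq z v.
  subst z.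
  have h1 := H1 w; have h2 := H2 u.
  rewrite (eq_sym w u) uw (eq_sym w v) zw /= in h1.
  rewrite (eq_sym u v) zu uw /= in h2.
  rewrite (sym u v) (eqP h2) (sym w u) (eqP h1) sym //.
have h1 := H1 z; have h2 := H2 z.
rewrite zu zv /= in h1; rewrite zv zw /= in h2.
by rewrite (eqP h1) (eqP h2).
Qed.

Lemma mem_tc (T : finType) (e : rel T) (irr : irreflexive e) z x :
  (z \in twin_class e x) = twb e z x.
Proof.
rewrite /twin_class inE twins_twb //.
by case: eqVneq => [->|_] /=; rewrite ?twb_refl.
Qed.

Lemma tc_disj (T : finType) (e : rel T) (irr : irreflexive e) (sym : symmetric e) z x y :
  z \in twin_class e x -> z \in twin_class e y -> twin_class e x = twin_class e y.
Proof.
rewrite !mem_tc // => h1 h2.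
have H : twb e x y by apply: twb_trans (twb_sym h1) h2.
apply/setP => w; rewrite !mem_tc //; apply/idP/idP => h.
  exact: twb_trans h H.
exact: twb_trans h (twb_sym H).
Qed.

Lemma cls_neq (T : finType) (e : rel T) (irr : irreflexive e) (sym : symmetric e)
  X Y u v : X \in twin_classes e -> Y \in twin_classes e -> X != Y ->
  u \in X -> v \in Y -> u != v.
Proof.
move=> /imsetP [x _ ->] /imsetP [y _ ->] XY uX vY.
apply/eqP => uv; rewrite uv in uX.
by move: XY; rewrite (tc_disj irr sym uX vY) eqxx.
Qed.

Lemma transfer (T : finType) (e : rel T) (irr : irreflexive e) (sym : symmetric e)
  X Y u v u' v' : X \in twin_classes e -> Y \in twin_classes e -> X != Y ->
  u \in X -> u' \in X -> v \in Y -> v' \in Y -> e u v = e u' v'.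
Proof.
move=> HX HY XY uX u'X vY v'Y.
have vu : v != u by rewrite eq_sym (cls_neq irr sym HX HY XY uX vY).
have vu' : v != u' by rewrite eq_sym (cls_neq irr sym HX HY XY u'X vY).
have u'v' : u' != v' by rewrite (cls_neq irr sym HX HY XY u'X v'Y).
move: HX HY XY uX u'X vY v'Y => /imsetP [x _ ->] /imsetP [y _ ->] XY.
rewrite !mem_tc // => uX u'X vY v'Y.
have t1 := twb_trans sym uX (twb_sym u'X).
have t2 := twb_trans sym vY (twb_sym v'Y).
have h1 := forallP t1 v; rewrite vu vu' /= in h1.
have h2 := forallP t2 u'; rewrite eq_sym vu' u'v' /= in h2.
by rewrite (eqP h1) sym (eqP h2) sym.
Qed.

Lemma adj_all (T : finType) (e : rel T) (irr : irreflexive e) (sym : symmetric e)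
  X Y u v : X \in twin_classes e -> Y \in twin_classes e -> class_adj e X Y ->
  u \in X -> v \in Y -> e u v.
Proof.
move=> HX HY /andP [XY /existsP [u0 /andP [u0X /existsP [v0 /andP [v0Y E]]]]] uX vY.
by rewrite -(transfer irr sym HX HY XY u0X uX v0Y vY).
Qed.

Lemma nadj_all (T : finType) (e : rel T) (irr : irreflexive e) (sym : symmetric e)
  X Y u v : X \in twin_classes e -> Y \in twin_classes e -> X != Y ->
  ~~ class_adj e X Y -> u \in X -> v \in Y -> ~~ e u v.
Proof.
move=> HX HY XY nadj uX vY; apply/negP => E; move/negP: nadj; apply.
rewrite /class_adj XY /=; apply/existsP; exists u; rewrite uX /=.
by apply/existsP; exists v; rewrite vY.
Qed.

Lemma ar1 n : 5 <= n -> 1 < n - 3. Proof. lia. Qed.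
Lemma ar2 n i : 5 <= n -> i < n - 5 -> i.+2 < n - 3. Proof. lia. Qed.
Lemma ar3 n m : 5 <= n -> m <= n - 3 -> m <> n - 2. Proof. lia. Qed.

Theorem lemma4p7 (T : finType) (e : rel T)
  (e_sym : symmetric e) (e_irr : irreflexive e)
  (A B C L : {set T}) :
  A \in twin_classes e -> B \in twin_classes e ->
  C \in twin_classes e -> L \in twin_classes e ->
  twin_classes e = [set A; B; C; L] ->
  uniq [:: A; B; C; L] ->
  class_adj e A B -> class_adj e A C -> class_adj e A L ->
  class_adj e B C -> ~~ class_adj e B L -> ~~ class_adj e C L ->
  typeN e B ->
  type1 C || typeK e C ->
  type1 L || typeN e L ->
  (typeK e C -> ~~ typeN e L /\ ~~ typeN e A) ->
  dist_number e <> #|T| - 2.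
Proof.
move=> HA HB HC HL _ Hu AB AC AL BC nBL nCL NB _ _ _.
move: Hu; rewrite /= !inE !negb_or => /andP [/and3P [nAB nAC nAL]
   /andP [/andP [nBC nBL'] /andP [nCL' _]]].
have tc x : x \in twin_class e x by rewrite mem_tc // twb_refl.
have [a aA] : exists a, a \in A by move/imsetP: HA => [x _ ->]; exists x.
have [c cC] : exists c, c \in C by move/imsetP: HC => [x _ ->]; exists x.
have [l lL] : exists l, l \in L by move/imsetP: HL => [x _ ->]; exists x.
move: NB => /andP [/card_gt1P [b1 [b2 [b1B b2B b12]]] /forall_inP NB].
have nb2b1 : ~~ e b2 b1 by exact: (forall_inP (NB b2 b2B) b1 b1B).
have eal : e a l by apply: (adj_all e_irr e_sym HA HL AL).
have eab1 : e a b1 by apply: (adj_all e_irr e_sym HA HB AB).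
have ecb1 : e c b1 by rewrite e_sym; apply: (adj_all e_irr e_sym HB HC BC).
have nb2l : ~~ e b2 l by apply: (nadj_all e_irr e_sym HB HL nBL' nBL).
have ncl : ~~ e c l by apply: (nadj_all e_irr e_sym HC HL nCL' nCL).
have ab1 : a != b1 by apply: (cls_neq e_irr e_sym HA HB).
have ab2 : a != b2 by apply: (cls_neq e_irr e_sym HA HB).
have ac : a != c by apply: (cls_neq e_irr e_sym HA HC).
have al : a != l by apply: (cls_neq e_irr e_sym HA HL).
have b1c : b1 != c by apply: (cls_neq e_irr e_sym HB HC).
have b2c : b2 != c by apply: (cls_neq e_irr e_sym HB HC).
have b1l : b1 != l by apply: (cls_neq e_irr e_sym HB HL).
have b2l : b2 != l by apply: (cls_neq e_irr e_sym HB HL).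
have cl : c != l by apply: (cls_neq e_irr e_sym HC HL).
pose W := a |: (b1 |: (b2 |: (c |: [set l]))).
pose V := ~: W.
have cardW : #|W| = 5.
  rewrite /W !cardsU1 cards1 !inE !negb_or ab1 ab2 ac al b12 b1c b1l b2c b2l cl.
  done.
have cardV : #|V| = #|T| - 5.
  by rewrite /V cardsCs setCK cardW.
have n5 : 5 <= #|T| by rewrite -cardW max_card.
pose col x := if x \in [set b1; l] then 0 else if x \in W then 1
              else (index x (enum V)).+2.
have colP x : col x < #|T| - 3.
  rewrite /col; case: ifP => _; first by apply: ltn_trans (ar1 n5).
  case: ifP => xW; first exact: ar1 n5.
  apply: (ar2 n5); rewrite -cardV.
  by rewrite cardE index_mem mem_enum /V inE xW.
pose cf : {ffun T -> 'I_(#|T| - 3)} := [ffun x => Ordinal (colP x)].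
have Hd : has_dist_col e (#|T| - 3).
  apply/existsP; exists cf; apply/forallP => s; apply/implyP.
  move=> /andP [/forallP Haut /forallP Hc].
  have Hcol x : col (s x) = col x.
    by have := Hc x; rewrite !ffunE => /eqP/(congr1 val).
  have He x y : e (s x) (s y) = e x y by apply/eqP; exact: (forallP (Haut x) y).
  have inj x y : s x = s y -> x = y := @perm_inj _ s x y.
  have col0 y : col y = 0 -> (y == b1) || (y == l).
    rewrite /col; case: ifP => [|_]; first by rewrite !inE.
    by case: ifP.
  have col1 y : col y = 1 -> [|| y == a, y == b2 | y == c].
    rewrite /col; case: ifP => // yBL; case: ifP => // yW _.
    move: yW yBL; rewrite /W !inE.
    by case: (y == a); case: (y == b1); case: (y == b2); case: (y == c); case: (y == l).
  have hb1 : (s b1 == b1) || (s b1 == l) by apply: col0; rewrite Hcol /col !inE eqxx.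
  have hl : (s l == b1) || (s l == l) by apply: col0; rewrite Hcol /col !inE eqxx orbT.
  have ha : [|| s a == a, s a == b2 | s a == c].
    by apply: col1; rewrite Hcol /col /W !inE eqxx (negbTE ab1) (negbTE al).
  have hb2 : [|| s b2 == a, s b2 == b2 | s b2 == c].
    by apply: col1; rewrite Hcol /col /W !inE eqxx (eq_sym b2 b1) (negbTE b12) (negbTE b2l) orbT.
  have hc : [|| s c == a, s c == b2 | s c == c].
    by apply: col1; rewrite Hcol /col /W !inE eqxx (eq_sym c b1) (negbTE b1c) (negbTE cl) !orbT.
  have Hsl : (s l = l /\ s b1 = b1) \/ (s l = b1 /\ s b1 = l).
    case/orP: hl => /eqP El; case/orP: hb1 => /eqP Eb.
    + by have := inj l b1 (etrans El (esym Eb)); move/eqP; rewrite eq_sym (negbTE b1l).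
    + by right.
    + by left.
    + by have := inj l b1 (etrans El (esym Eb)); move/eqP; rewrite eq_sym (negbTE b1l).
  have Sa : s a = a.
    have [h1 h2] : e (s a) l /\ e (s a) b1.
      case: Hsl => [[El Eb]|[El Eb]]; split.
      - by rewrite -El He.
      - by rewrite -Eb He.
      - by rewrite -Eb He.
      - by rewrite -El He.
    case/or3P: ha => /eqP Ea //; rewrite Ea in h1.
    - by rewrite h1 in nb2l.
    - by rewrite h1 in ncl.
  have [Sl Sb1] : s l = l /\ s b1 = b1.
    case: Hsl => // [[El Eb]]; exfalso.
    have := He c b1; rewrite Eb ecb1; case/or3P: hc => /eqP Ec; rewrite Ec.
    - by move: (inj c a (etrans Ec (esym Sa))) => /eqP; rewrite eq_sym (negbTE ac).
    - by rewrite (negbTE nb2l).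
    - by rewrite (negbTE ncl).
  have Sc : s c = c.
    have := He c b1; rewrite Sb1 ecb1; case/or3P: hc => /eqP Ec; rewrite ?Ec //.
    - by move: (inj c a (etrans Ec (esym Sa))) => /eqP; rewrite eq_sym (negbTE ac).
    - by rewrite (negbTE nb2b1).
  have Sb2 : s b2 = b2.
    case/or3P: hb2 => /eqP E2 //.
    - by move: (inj b2 a (etrans E2 (esym Sa))) => /eqP; rewrite eq_sym (negbTE ab2).
    - by move: (inj b2 c (etrans E2 (esym Sc))) => /eqP; rewrite (negbTE b2c).
  apply/eqP/permP => x; rewrite perm1.
  case xW: (x \in W).
    by move: xW; rewrite /W !inE => /orP[/eqP->|/orP[/eqP->|/orP[/eqP->|/orP[/eqP->|/eqP->]]]].
  have xBL : (x \in [set b1; l]) = false.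
    by apply: contraFF xW; rewrite /W !inE => /orP [] ->; rewrite ?orbT.
  have := Hcol x; rewrite /col xBL xW.
  case: ifP => [_ //|_]; case: ifP => [_ //|sxW] /succn_inj/succn_inj Hi.
  have sxV : s x \in enum V by rewrite mem_enum /V inE sxW.
  have xV : x \in enum V by rewrite mem_enum /V inE xW.
  by rewrite -(nth_index x sxV) Hi nth_index.
rewrite /dist_number; case: ex_minnP => m _ Hmin.
exact: ar3 n5 (Hmin _ Hd).
Qed.
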